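(* Let $h:\mathbb{R}\to\mathbb{R}$ be any of the following functions: the sigmoid $h(x)=1/(1+e^{-x})$; $h=\tanh$; $h=\arctan$; the quadratic $h(x)=x^2$; or $h(x)=\lambda x$ for $x\ge0$ and $h(x)=\lambda\alpha(e^x-1)$ for $x<0$, with $\alpha>0$ and either $\lambda=1$ (ELU) or $\lambda>1$ (SELU). Then: (i) there exist $v_1,v_2,v_3,v_4\in\mathbb{R}$ with $h(v_1)h(v_4)=h(v_2)h(v_3)$ and $h(v_1)h\!\left(\frac{v_3+v_4}{2}\right)\ne h(v_3)h\!\left(\frac{v_1+v_2}{2}\right)$; and (ii) there exist $v_1,v_2,u_1,u_2\in\mathbb{R}$ such that $u_1h(v_1)+u_2h(v_2)=\tfrac13$; $h$ is infinitely differentiable at $v_1$ and $v_2$; there is $c>0$ with $|h^{(n)}(v_1)|\le c^nn!$ and $|h^{(n)}(v_2)|\le c^nn!$ for all $n\ge1$; $(u_1h'(v_1))^2+\frac{u_1h''(v_1)}{3}>0$; and $(u_1h'(v_1)u_2h'(v_2))^2<\big((u_1h'(v_1))^2+\frac{u_1h''(v_1)}{3}\big)\big((u_2h'(v_2))^2+\frac{u_2h''(v_2)}{3}\big)$. Consequently, for each such $h$, the one-hidden-layer network risk $\ell((W_j,b_j)_{j=1}^2)=\tfrac12\|W_2h(W_1X+b_1\mathbf{1}_3^T)+b_2\mathbf{1}_3^T-Y\|_F^2$ with $W_1\in\mathbb{R}^{2\times2}$, $b_1\in\mathbb{R}^2$, $W_2\in\mathbb{R}^{1\times2}$, $b_2\in\mathbb{R}$,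 $X=\begin{bmatrix}1&0&\frac12\\0&1&\frac12\end{bmatrix}$, $Y=[0\ 0\ 1]$, has a global minimum with value $0$ and a local minimum with value $\tfrac13$.
   Context: $h^{(n)}$ denotes the $n$-th derivative of $h$; $\mathbf{1}_3$ is the all-ones vector in $\mathbb{R}^3$; $h$ is applied entrywise. *)

(* Defs.v *)
From Stdlib Require Import Reals.
From Coquelicot Require Import Coquelicot.
Open Scope R_scope.

Definition sigmoid (x : R) : R := 1 / (1 + exp (- x)).
Definition tanhR (x : R) : R := (exp x - exp (- x)) / (exp x + exp (- x)).
Definition quadR (x : R) : R := x ^ 2.
Definition elu (lambda alpha : R) (x : R) : R :=
  if Rle_dec 0 x then lambda * x else lambda * alpha * (exp x - 1).

Definition admissible_activation (h : R -> R) : Prop :=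
  h = sigmoid \/ h = tanhR \/ h = atan \/ h = quadR \/
  (exists lambda alpha : R, 0 < alpha /\ (lambda = 1 \/ 1 < lambda) /\
     h = elu lambda alpha).

Record params := Params {
  W1_11 : R; W1_12 : R; W1_21 : R; W1_22 : R;
  b1_1 : R; b1_2 : R;
  W2_1 : R; W2_2 : R;
  b2 : R }.

Definition net (h : R -> R) (p : params) (x1 x2 : R) : R :=
  W2_1 p * h (W1_11 p * x1 + W1_12 p * x2 + b1_1 p)
  + W2_2 p * h (W1_21 p * x1 + W1_22 p * x2 + b1_2 p) + b2 p.

(* X = [[1,0,1/2],[0,1,1/2]], Y = [0 0 1];
   risk = 1/2 || W2 h(W1 X + b1 1^T) + b2 1^T - Y ||_F^2 *)
Definition risk (h : R -> R) (p : params) : R :=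
  / 2 * ( (net h p 1 0 - 0) ^ 2 + (net h p 0 1 - 0) ^ 2
          + (net h p (1/2) (1/2) - 1) ^ 2 ).

Definition params_close (eps : R) (p p' : params) : Prop :=
  Rabs (W1_11 p' - W1_11 p) < eps /\ Rabs (W1_12 p' - W1_12 p) < eps /\
  Rabs (W1_21 p' - W1_21 p) < eps /\ Rabs (W1_22 p' - W1_22 p) < eps /\
  Rabs (b1_1 p' - b1_1 p) < eps /\ Rabs (b1_2 p' - b1_2 p) < eps /\
  Rabs (W2_1 p' - W2_1 p) < eps /\ Rabs (W2_2 p' - W2_2 p) < eps /\
  Rabs (b2 p' - b2 p) < eps.

Definition is_global_min {T : Type} (f : T -> R) (p : T) : Prop :=
  forall q, f p <= f q.

Definition is_local_min (f : params -> R) (p : params) : Prop :=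
  exists eps : R, 0 < eps /\ forall q, params_close eps p q -> f p <= f q.

Definition smooth_at (h : R -> R) (v : R) : Prop :=
  forall n : nat, ex_derive_n h n v.

(* Main.v *)
Require Import Defs.
From Stdlib Require Import Reals.
From Coquelicot Require Import Coquelicot.
From Stdlib Require Import Lra Lia Psatz List.
Open Scope R_scope.

Fixpoint peval (p : list R) (x : R) : R :=
  match p with nil => 0 | a :: q => a + x * peval q x end.
Fixpoint padd (p q : list R) : list R :=
  match p, q with
  | nil, _ => q
  | _, nil => p
  | a :: p', b :: q' => (a + b) :: padd p' q'
  end.
Definition pscal (a : R) (p : list R) : list R := map (Rmult a) p.
Fixpoint pder (p : list R) : list R :=
  match p with nil => nil | a :: q => padd q (0 :: pder q) end.
Fixpoint norm1 (p : list R) : R :=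
  match p with nil => 0 | a :: q => Rabs a + norm1 q end.

Lemma peval_padd p q x : peval (padd p q) x = peval p x + peval q x.
Proof.
  revert q; induction p as [|a p IH]; intros [|b q]; simpl; try ring.
  rewrite IH; ring.
Qed.

Lemma peval_pscal a p x : peval (pscal a p) x = a * peval p x.
Proof. induction p as [|b p IH]; simpl; [ring|]. unfold pscal in *. simpl. rewrite IH; ring. Qed.

Lemma norm1_nonneg p : 0 <= norm1 p.
Proof. induction p; simpl; [lra|]. pose proof (Rabs_pos a); lra. Qed.

Lemma norm1_padd p q : norm1 (padd p q) <= norm1 p + norm1 q.
Proof.
  revert q; induction p as [|a p IH]; intros [|b q]; simpl; try lra.
  pose proof (Rabs_triang a b). pose proof (IH q). lra.
Qed.

Lemma norm1_pscal a p : norm1 (pscal a p) = Rabs a * norm1 p.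
Proof. induction p as [|b p IH]; simpl; [ring|]. unfold pscal in *. simpl. rewrite IH, Rabs_mult; ring. Qed.

Lemma length_padd p q : (length (padd p q) = Nat.max (length p) (length q))%nat.
Proof.
  revert q; induction p as [|a p IH]; intros [|b q]; simpl; auto.
Qed.

Lemma length_pscal a p : length (pscal a p) = length p.
Proof. apply length_map. Qed.

Lemma length_pder p : (length (pder p) <= length p)%nat.
Proof.
  induction p as [|a p IH]; simpl; [lia|].
  rewrite length_padd. simpl. lia.
Qed.

Lemma norm1_pder p : norm1 (pder p) <= INR (length p) * norm1 p.
Proof.
  induction p as [|a p IH]; simpl; [lra|].
  eapply Rle_trans; [apply norm1_padd|]. simpl.
  rewrite Rabs_R0. 
  pose proof (norm1_nonneg p). pose proof (Rabs_pos a). pose proof (pos_INR (length p)).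
  destruct (length p) eqn:E.
  - simpl in *. nra.
  - rewrite S_INR in *. nra.
Qed.

Lemma peval_bound p x : Rabs x <= 1 -> Rabs (peval p x) <= norm1 p.
Proof.
  intros Hx; induction p as [|a p IH]; simpl; [rewrite Rabs_R0; lra|].
  eapply Rle_trans; [apply Rabs_triang|]. rewrite Rabs_mult.
  pose proof (Rabs_pos x). pose proof (Rabs_pos (peval p x)). nra.
Qed.

Lemma isd_const (a x : R) : is_derive (fun _ => a) x 0.
Proof. exact (is_derive_const a x). Qed.
Lemma isd_id (x : R) : is_derive (fun t => t) x 1.
Proof. exact (is_derive_id x). Qed.
Lemma isd_plus (f g : R -> R) (x : R) (df dg : R) : is_derive f x df -> is_derive g x dg ->
  is_derive (fun t => f t + g t) x (df + dg).
Proof. intros H1 H2. exact (@is_derive_plus R_AbsRing R_NormedModule f g x df dg H1 H2). Qed.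
Lemma isd_minus (f g : R -> R) (x : R) (df dg : R) : is_derive f x df -> is_derive g x dg ->
  is_derive (fun t => f t - g t) x (df - dg).
Proof. intros H1 H2. exact (@is_derive_minus R_AbsRing R_NormedModule f g x df dg H1 H2). Qed.
Lemma isd_mult (f g : R -> R) (x : R) (df dg : R) : is_derive f x df -> is_derive g x dg ->
  is_derive (fun t => f t * g t) x (df * g x + f x * dg).
Proof. intros H1 H2. exact (@is_derive_mult R_AbsRing f g x df dg H1 H2 (fun n m => Rmult_comm n m)). Qed.
Lemma isd_comp (f g : R -> R) (x : R) (df dg : R) : is_derive f (g x) df -> is_derive g x dg ->
  is_derive (fun t => f (g t)) x (dg * df).
Proof. intros H1 H2. exact (@is_derive_comp R_AbsRing R_NormedModule f g x df dg H1 H2). Qed.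
Lemma isd_ext (f g : R -> R) (x : R) (l l' : R) : (forall t, f t = g t) -> l = l' -> is_derive f x l -> is_derive g x l'.
Proof. intros H Hl H1. subst l'. exact (is_derive_ext f g x l H H1). Qed.

Lemma peval_derive p (x : R) : is_derive (peval p) x (peval (pder p) x).
Proof.
  induction p as [|a p IH]; simpl.
  - apply isd_const.
  - rewrite peval_padd. simpl.
    apply isd_ext with (f := fun t => a + t * peval p t)
      (l := 0 + (1 * peval p x + x * peval (pder p) x)).
    + intros t; reflexivity.
    + ring.
    + apply isd_plus; [apply isd_const|]. apply isd_mult; [apply isd_id|exact IH].
Qed.

Lemma ball_locally (v rho x : R) : Rabs (x - v) < rho ->
  locally x (fun t => Rabs (t - v) < rho).
Proof.
  intros H.
  assert (Hp : 0 < rho - Rabs (x - v)) by lra.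
  exists (mkposreal _ Hp). intros y Hy.
  change (Rabs (y - x) < rho - Rabs (x - v)) in Hy.
  replace (y - v) with ((y - x) + (x - v)) by ring.
  pose proof (Rabs_triang (y - x) (x - v)). lra.
Qed.

Lemma mvt_bound (g dg : R -> R) (a b B : R) :
  (forall t, Rmin a b <= t <= Rmax a b -> is_derive g t (dg t) /\ Rabs (dg t) <= B) ->
  Rabs (g b - g a) <= B * Rabs (b - a).
Proof.
  intros H.
  destruct (MVT_gen g a b dg) as [c [Hc Heq]].
  - intros t Ht. apply H. lra.
  - intros t Ht. apply continuity_pt_filterlim.
    apply (ex_derive_continuous g t). exists (dg t). apply H. exact Ht.
  - rewrite Heq, Rabs_mult. pose proof (Rabs_pos (b - a)).
    destruct (H c Hc) as [_ Hb]. nra.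
Qed.

Lemma between_ball (v rho a b t : R) : Rabs (a - v) < rho -> Rabs (b - v) < rho ->
  Rmin a b <= t <= Rmax a b -> Rabs (t - v) < rho.
Proof.
  intros Ha Hb Ht. unfold Rmin, Rmax in Ht.
  apply Rabs_def2 in Ha. apply Rabs_def2 in Hb.
  apply Rabs_def1; destruct (Rle_dec a b); lra.
Qed.

Lemma lip_ball (F G : R -> R) (v rho K : R) :
  (forall x, Rabs (x - v) < rho -> is_derive F x (G x) /\ Rabs (G x) <= K) ->
  forall a b, Rabs (a - v) < rho -> Rabs (b - v) < rho ->
  Rabs (F b - F a) <= K * Rabs (b - a).
Proof.
  intros H a b Ha Hb. apply mvt_bound with (dg := G). intros t Ht. apply H.
  exact (between_ball v rho a b t Ha Hb Ht).
Qed.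

Lemma between0 (e t : R) : Rmin 0 e <= t <= Rmax 0 e -> Rabs t <= Rabs e.
Proof.
  intros Ht. unfold Rmin, Rmax in Ht. unfold Rabs.
  destruct (Rle_dec 0 e); destruct (Rcase_abs t); destruct (Rcase_abs e); lra.
Qed.

Lemma odd_est (F G : R -> R) (v rho K c e : R) : 0 <= K ->
  (forall x, Rabs (x - v) < rho -> is_derive F x (G x)) ->
  (forall a b, Rabs (a - v) < rho -> Rabs (b - v) < rho -> Rabs (G b - G a) <= K * Rabs (b - a)) ->
  Rabs (c - v) + Rabs e < rho ->
  Rabs ((F (c + e) - F (c - e)) / 2 - G c * e) <= K * (e * e).
Proof.
  intros HK HD HL Hce.
  pose (g := fun t => (F (c + t) - F (c - t)) / 2 - G c * t).
  pose (dg := fun t => (G (c + t) + G (c - t)) / 2 - G c).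
  assert (Hin : forall t, Rabs t <= Rabs e -> Rabs (c + t - v) < rho /\ Rabs (c - t - v) < rho).
  { intros t Ht. split.
    - replace (c + t - v) with ((c - v) + t) by ring. pose proof (Rabs_triang (c - v) t). lra.
    - replace (c - t - v) with ((c - v) + - t) by ring. pose proof (Rabs_triang (c - v) (- t)).
      rewrite Rabs_Ropp in H. lra. }
  assert (Hc : Rabs (c - v) < rho) by (pose proof (Rabs_pos e); lra).
  assert (Hm := mvt_bound g dg 0 e (K * Rabs e)).
  replace ((F (c + e) - F (c - e)) / 2 - G c * e) with (g e - g 0).
  2:{ unfold g; cbv beta. rewrite Rplus_0_r, Rminus_0_r. lra. }
  replace (K * (e * e)) with (K * Rabs e * Rabs (e - 0)).
  2:{ replace (e - 0) with e by ring.
      assert (Habs : Rabs e * Rabs e = e * e).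
      { rewrite <- Rabs_mult. apply Rabs_right. pose proof (Rle_0_sqr e). unfold Rsqr in *. lra. }
      rewrite Rmult_assoc, Habs. ring. }
  apply Hm. intros t Ht. apply between0 in Ht. destruct (Hin t Ht) as [H1 H2].
  split.
  - unfold g, dg.
    apply isd_ext with (f := fun t => (F (c + t) - F (c - t)) * / 2 - G c * t)
       (l := (1 * G (c + t) - (-1) * G (c - t)) * / 2 - G c * 1).
    + intros; unfold Rdiv; ring.
    + field.
    + apply isd_minus.
      * apply isd_ext with (f := fun t => / 2 * (F (c + t) - F (c - t))) (l := / 2 * (1 * G (c + t) - (-1) * G (c - t))).
        { intros; ring. } { ring. }
        apply is_derive_scal. apply isd_minus.
        -- apply (isd_comp F (fun t => c + t)). apply HD; exact H1.
           apply isd_ext with (f := fun t => c + t) (l := 0 + 1); [reflexivity|ring|].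
           apply isd_plus; [apply isd_const|apply isd_id].
        -- apply (isd_comp F (fun t => c - t)). apply HD; exact H2.
           apply isd_ext with (f := fun t => c - t) (l := 0 - 1); [reflexivity|ring|].
           apply isd_minus; [apply isd_const|apply isd_id].
      * apply isd_ext with (f := fun t => G c * t) (l := G c * 1); [reflexivity|ring|].
        apply is_derive_scal. apply isd_id.
  - unfold dg.
    assert (A1 := HL c (c + t) Hc H1). assert (A2 := HL c (c - t) Hc H2).
    replace (c + t - c) with t in A1 by ring. replace (c - t - c) with (- t) in A2 by ring.
    rewrite Rabs_Ropp in A2.
    replace ((G (c + t) + G (c - t)) / 2 - G c) with ((G (c + t) - G c) / 2 + (G (c - t) - G c) / 2) by field.
    eapply Rle_trans; [apply Rabs_triang|].
    unfold Rdiv. rewrite !Rabs_mult. rewrite (Rabs_right (/ 2)) by lra.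
    nra.
Qed.

Lemma even_est (F F1 G : R -> R) (v rho K c e : R) : 0 <= K ->
  (forall x, Rabs (x - v) < rho -> is_derive F x (F1 x)) ->
  (forall x, Rabs (x - v) < rho -> is_derive F1 x (G x)) ->
  (forall a b, Rabs (a - v) < rho -> Rabs (b - v) < rho -> Rabs (G b - G a) <= K * Rabs (b - a)) ->
  Rabs (c - v) + Rabs e < rho ->
  Rabs ((F (c + e) + F (c - e)) / 2 - F c - G c * (e * e) / 2) <= K * (Rabs e * (e * e)).
Proof.
  intros HK HD0 HD1 HL Hce.
  pose (g := fun t => (F (c + t) + F (c - t)) / 2 - F c - G c * (t * t) / 2).
  pose (dg := fun t => (F1 (c + t) - F1 (c - t)) / 2 - G c * t).
  assert (Hin : forall t, Rabs t <= Rabs e -> Rabs (c + t - v) < rho /\ Rabs (c - t - v) < rho).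
  { intros t Ht. split.
    - replace (c + t - v) with ((c - v) + t) by ring. pose proof (Rabs_triang (c - v) t). lra.
    - replace (c - t - v) with ((c - v) + - t) by ring. pose proof (Rabs_triang (c - v) (- t)).
      rewrite Rabs_Ropp in H. lra. }
  assert (Hm := mvt_bound g dg 0 e (K * (e * e))).
  replace ((F (c + e) + F (c - e)) / 2 - F c - G c * (e * e) / 2) with (g e - g 0).
  2:{ unfold g; cbv beta. rewrite Rplus_0_r, Rminus_0_r. lra. }
  replace (K * (Rabs e * (e * e))) with (K * (e * e) * Rabs (e - 0)).
  2:{ rewrite Rminus_0_r. lra. }
  apply Hm. intros t Ht. apply between0 in Ht. destruct (Hin t Ht) as [H1 H2].
  split.
  - unfold g, dg.
    apply isd_ext with (f := fun t => (F (c + t) + F (c - t)) * / 2 - F c - G c * / 2 * (t * t))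
       (l := (1 * F1 (c + t) + (-1) * F1 (c - t)) * / 2 - 0 - G c * / 2 * (1 * t + t * 1)).
    + intros; unfold Rdiv; lra.
    + field.
    + apply isd_minus; [apply isd_minus|].
      * apply isd_ext with (f := fun t => / 2 * (F (c + t) + F (c - t))) (l := / 2 * (1 * F1 (c + t) + (-1) * F1 (c - t))).
        { intros; lra. } { lra. }
        apply is_derive_scal. apply isd_plus.
        -- apply (isd_comp F (fun t => c + t)). apply HD0; exact H1.
           apply isd_ext with (f := fun t => c + t) (l := 0 + 1); [reflexivity|lra|].
           apply isd_plus; [apply isd_const|apply isd_id].
        -- apply (isd_comp F (fun t => c - t)). apply HD0; exact H2.
           apply isd_ext with (f := fun t => c - t) (l := 0 - 1); [reflexivity|lra|].
           apply isd_minus; [apply isd_const|apply isd_id].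
      * apply isd_const.
      * apply is_derive_scal. apply isd_mult; apply isd_id.
  - unfold dg.
    assert (Hce' : Rabs (c - v) + Rabs t < rho) by lra.
    pose proof (odd_est F1 G v rho K c t HK HD1 HL Hce').
    assert (t * t <= e * e).
    { assert (Rabs t * Rabs t <= Rabs e * Rabs e) by (pose proof (Rabs_pos t); nra).
      rewrite <- !Rabs_mult in H0. rewrite !Rabs_right in H0 by (pose proof (Rle_0_sqr t); pose proof (Rle_0_sqr e); unfold Rsqr in *; lra).
      exact H0. }
    nra.
Qed.

Lemma family_derive (h : R -> R) (f : nat -> R -> R) (v rho : R) :
  (forall x, Rabs (x - v) < rho -> h x = f O x) ->
  (forall n x, Rabs (x - v) < rho -> is_derive (f n) x (f (S n) x)) ->
  forall n x, Rabs (x - v) < rho -> Derive_n h n x = f n x /\ ex_derive_n h n x.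
Proof.
  intros H0 HD n. induction n as [|n IH]; intros x Hx.
  - simpl. split; [apply H0; exact Hx| exact I].
  - assert (Hloc : locally x (fun t => f n t = Derive_n h n t)).
    { eapply filter_imp; [|apply (ball_locally v rho x Hx)].
      intros t Ht. symmetry. apply (IH t Ht). }
    split.
    + simpl. rewrite (Derive_ext_loc (Derive_n h n) (f n) x).
      * apply is_derive_unique. apply HD; exact Hx.
      * eapply filter_imp; [|exact Hloc]. intros t Ht; symmetry; exact Ht.
    + simpl. apply (ex_derive_ext_loc (f n) (Derive_n h n) x Hloc).
      exists (f (S n) x). apply HD; exact Hx.
Qed.

Lemma abs_prod_le (a b A B : R) : Rabs a <= A -> Rabs b <= B -> Rabs (a * b) <= A * B.
Proof.
  intros Ha Hb. rewrite Rabs_mult. pose proof (Rabs_pos a). pose proof (Rabs_pos b).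
  apply Rmult_le_compat; lra.
Qed.

Lemma quad_core (d1 d2 u1 u2 : R) :
  (u1*d1)^2 + u1*d2/3 > 0 ->
  u1*u2*d2*(d1^2*(u1+u2) + d2/3) > 0 ->
  exists eta, 0 < eta /\ forall U1 U2 e1 e2 p1 p2 q1 q2 r1 r2 s1 s2 : R,
   Rabs (U1 - u1) <= eta -> Rabs (U2 - u2) <= eta ->
   Rabs p1 <= eta -> Rabs p2 <= eta -> Rabs q1 <= eta -> Rabs q2 <= eta ->
   Rabs r1 <= eta * Rabs e1 -> Rabs r2 <= eta * Rabs e2 ->
   Rabs s1 <= eta * (e1*e1) -> Rabs s2 <= eta * (e2*e2) ->
   0 <= (U1*((d1+p1)*e1 + r1) + U2*((d1+p2)*e2 + r2))^2
        + 2/3 * (U1*((d2+q1)*(e1*e1)/2 + s1) + U2*((d2+q2)*(e2*e2)/2 + s2)).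
Proof.
  intros HP11 Hdet.
  set (P11 := (u1*d1)^2 + u1*d2/3).
  set (P22 := (u2*d1)^2 + u2*d2/3).
  set (P12 := d1^2*u1*u2).
  set (det := P11*P22 - P12^2).
  assert (Hdet' : det = u1*u2*d2*(d1^2*(u1+u2) + d2/3) / 3) by (unfold det, P11, P22, P12; field).
  assert (Hdp : det > 0) by (rewrite Hdet'; lra).
  assert (HP22 : P22 > 0).
  { unfold det in Hdp. fold P11 in HP11. pose proof (pow2_ge_0 P12).
    destruct (Rle_lt_dec P22 0); [|lra]. nra. }
  set (tr := P11 + P22).
  assert (Htr : tr > 0) by (unfold tr; fold P11 in HP11; lra).
  set (kap := det / tr).
  assert (Hkap : kap > 0) by (unfold kap; apply Rdiv_lt_0_compat; lra).
  set (Ub := Rabs u1 + Rabs u2 + 1).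
  assert (HUb : 1 <= Ub) by (unfold Ub; pose proof (Rabs_pos u1); pose proof (Rabs_pos u2); lra).
  set (a1 := Rabs d1). set (a2 := Rabs d2).
  assert (Ea1 : Rabs d1 = a1) by reflexivity. assert (Ea2 : Rabs d2 = a2) by reflexivity.
  assert (Ha1 : 0 <= a1) by apply Rabs_pos. assert (Ha2 : 0 <= a2) by apply Rabs_pos.
  set (C := 4*a1*Ub*(a1+2*Ub) + a2 + 2*Ub).
  assert (HC : C > 0) by (unfold C; nra).
  exists (Rmin 1 (kap / C)). split.
  { apply Rmin_pos; [lra|]. apply Rdiv_lt_0_compat; lra. }
  intros U1 U2 e1 e2 p1 p2 q1 q2 r1 r2 s1 s2 HU1 HU2 Hp1 Hp2 Hq1 Hq2 Hr1 Hr2 Hs1 Hs2.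
  set (eta := Rmin 1 (kap / C)) in *.
  assert (He1 : eta <= 1) by apply Rmin_l.
  assert (He2 : eta <= kap / C) by apply Rmin_r.
  assert (Hepos : 0 < eta) by (apply Rmin_pos; [lra|]; apply Rdiv_lt_0_compat; lra).
  assert (HetaC : eta * C <= kap).
  { apply (Rmult_le_compat_r C) in He2; [|lra]. unfold Rdiv in He2.
    rewrite Rmult_assoc, Rinv_l in He2 by lra. lra. }
  assert (HbU1 : Rabs U1 <= Ub).
  { replace U1 with ((U1 - u1) + u1) by ring. pose proof (Rabs_triang (U1 - u1) u1).
    unfold Ub. pose proof (Rabs_pos u2). lra. }
  assert (HbU2 : Rabs U2 <= Ub).
  { replace U2 with ((U2 - u2) + u2) by ring. pose proof (Rabs_triang (U2 - u2) u2).
    unfold Ub. pose proof (Rabs_pos u1). lra. }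
  set (E := e1*e1 + e2*e2).
  set (N := Rabs e1 + Rabs e2).
  assert (HN2 : N * N <= 2 * E).
  { unfold N, E. assert (Rabs e1 * Rabs e1 = e1 * e1) by (rewrite <- Rabs_mult; apply Rabs_right; nra).
    assert (Rabs e2 * Rabs e2 = e2 * e2) by (rewrite <- Rabs_mult; apply Rabs_right; nra).
    pose proof (pow2_ge_0 (Rabs e1 - Rabs e2)). nra. }
  assert (HE : 0 <= E) by (unfold E; nra).
  assert (HNp : 0 <= N) by (unfold N; pose proof (Rabs_pos e1); pose proof (Rabs_pos e2); lra).
  set (L0 := d1 * (u1*e1 + u2*e2)).
  set (Q2 := d2 * (u1*(e1*e1) + u2*(e2*e2)) / 3).
  assert (HQ0 : (L0^2 + Q2) * tr - det * E =
     (P11*e1 + P12*e2)^2 + (P12*e1 + P22*e2)^2) by (unfold L0, Q2, tr, det, P11, P22, P12, E; field).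
  assert (HQ0k : L0^2 + Q2 >= kap * E).
  { unfold kap. apply Rle_ge.
    apply (Rmult_le_reg_r tr); [lra|].
    replace (det / tr * E * tr) with (det * E) by (field; lra).
    pose proof (pow2_ge_0 (P11*e1 + P12*e2)).
    pose proof (pow2_ge_0 (P12*e1 + P22*e2)). lra. }
  set (eps1 := (U1 - u1) * d1 * e1 + U1 * p1 * e1 + U1 * r1 + ((U2 - u2) * d1 * e2 + U2 * p2 * e2 + U2 * r2)).
  assert (HD : U1*((d1+p1)*e1 + r1) + U2*((d1+p2)*e2 + r2) = L0 + eps1) by (unfold L0, eps1; ring).
  set (eps2 := 2/3 * ((U1 - u1) * d2 * (e1*e1) / 2 + U1 * q1 * (e1*e1) / 2 + U1 * s1
                  + ((U2 - u2) * d2 * (e2*e2) / 2 + U2 * q2 * (e2*e2) / 2 + U2 * s2))).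
  assert (HM : 2/3 * (U1*((d2+q1)*(e1*e1)/2 + s1) + U2*((d2+q2)*(e2*e2)/2 + s2)) = Q2 + eps2)
    by (unfold Q2, eps2; field).
  rewrite HD, HM.
  assert (Hee1 : Rabs eps1 <= eta * (a1 + 2*Ub) * N).
  { unfold eps1.
    assert (T1 : Rabs ((U1 - u1) * d1 * e1) <= eta * a1 * Rabs e1)
      by (apply abs_prod_le; [apply abs_prod_le|]; rewrite ?Ea1, ?Ea2; lra).
    assert (T2 : Rabs (U1 * p1 * e1) <= Ub * eta * Rabs e1)
      by (apply abs_prod_le; [apply abs_prod_le|]; rewrite ?Ea1, ?Ea2; lra).
    assert (T3 : Rabs (U1 * r1) <= Ub * (eta * Rabs e1)) by (apply abs_prod_le; lra).
    assert (T4 : Rabs ((U2 - u2) * d1 * e2) <= eta * a1 * Rabs e2)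
      by (apply abs_prod_le; [apply abs_prod_le|]; rewrite ?Ea1, ?Ea2; lra).
    assert (T5 : Rabs (U2 * p2 * e2) <= Ub * eta * Rabs e2)
      by (apply abs_prod_le; [apply abs_prod_le|]; rewrite ?Ea1, ?Ea2; lra).
    assert (T6 : Rabs (U2 * r2) <= Ub * (eta * Rabs e2)) by (apply abs_prod_le; lra).
    repeat (eapply Rle_trans; [apply Rabs_triang|]).
    pose proof (Rabs_triang ((U1 - u1) * d1 * e1 + U1 * p1 * e1) (U1 * r1)).
    pose proof (Rabs_triang ((U1 - u1) * d1 * e1) (U1 * p1 * e1)).
    pose proof (Rabs_triang ((U2 - u2) * d1 * e2 + U2 * p2 * e2) (U2 * r2)).
    pose proof (Rabs_triang ((U2 - u2) * d1 * e2) (U2 * p2 * e2)).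
    unfold N. lra. }
  assert (Hee2 : Rabs eps2 <= eta * (a2 + 2*Ub) * E).
  { unfold eps2.
    assert (He1p : 0 <= e1*e1) by nra. assert (He2p : 0 <= e2*e2) by nra.
    assert (T1 : Rabs ((U1 - u1) * d2 * (e1*e1) / 2) <= eta * a2 * (e1*e1) / 2).
    { unfold Rdiv. apply abs_prod_le; [|rewrite Rabs_right; lra].
      apply abs_prod_le; [apply abs_prod_le|]; [lra|rewrite ?Ea2; lra|rewrite Rabs_right; lra]. }
    assert (T2 : Rabs (U1 * q1 * (e1*e1) / 2) <= Ub * eta * (e1*e1) / 2).
    { unfold Rdiv. apply abs_prod_le; [|rewrite Rabs_right; lra].
      apply abs_prod_le; [apply abs_prod_le|]; [lra|rewrite ?Ea2; lra|rewrite Rabs_right; lra]. }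
    assert (T3 : Rabs (U1 * s1) <= Ub * (eta * (e1*e1))) by (apply abs_prod_le; lra).
    assert (T4 : Rabs ((U2 - u2) * d2 * (e2*e2) / 2) <= eta * a2 * (e2*e2) / 2).
    { unfold Rdiv. apply abs_prod_le; [|rewrite Rabs_right; lra].
      apply abs_prod_le; [apply abs_prod_le|]; [lra|rewrite ?Ea2; lra|rewrite Rabs_right; lra]. }
    assert (T5 : Rabs (U2 * q2 * (e2*e2) / 2) <= Ub * eta * (e2*e2) / 2).
    { unfold Rdiv. apply abs_prod_le; [|rewrite Rabs_right; lra].
      apply abs_prod_le; [apply abs_prod_le|]; [lra|rewrite ?Ea2; lra|rewrite Rabs_right; lra]. }
    assert (T6 : Rabs (U2 * s2) <= Ub * (eta * (e2*e2))) by (apply abs_prod_le; lra).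
    rewrite Rabs_mult, (Rabs_right (2/3)) by lra.
    set (X1 := (U1 - u1) * d2 * (e1 * e1) / 2) in *. set (X2 := U1 * q1 * (e1 * e1) / 2) in *.
    set (X3 := U1 * s1) in *. set (X4 := (U2 - u2) * d2 * (e2 * e2) / 2) in *.
    set (X5 := U2 * q2 * (e2 * e2) / 2) in *. set (X6 := U2 * s2) in *.
    pose proof (Rabs_triang (X1 + X2 + X3) (X4 + X5 + X6)).
    pose proof (Rabs_triang (X1 + X2) X3). pose proof (Rabs_triang X1 X2).
    pose proof (Rabs_triang (X4 + X5) X6). pose proof (Rabs_triang X4 X5).
    assert (0 <= eta * a2 * (e1*e1)) by (apply Rmult_le_pos; [apply Rmult_le_pos|]; lra).
    assert (0 <= eta * a2 * (e2*e2)) by (apply Rmult_le_pos; [apply Rmult_le_pos|]; lra).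
    assert (0 <= Ub * eta * (e1*e1)) by (apply Rmult_le_pos; [apply Rmult_le_pos|]; lra).
    assert (0 <= Ub * eta * (e2*e2)) by (apply Rmult_le_pos; [apply Rmult_le_pos|]; lra).
    unfold E. nra. }
  assert (HL0 : Rabs L0 <= a1 * Ub * N).
  { unfold L0. rewrite Rabs_mult, Ea1, Rmult_assoc. apply Rmult_le_compat_l; [lra|].
    eapply Rle_trans; [apply Rabs_triang|]. rewrite !Rabs_mult.
    unfold N, Ub. pose proof (Rabs_pos e1). pose proof (Rabs_pos e2).
    pose proof (Rabs_pos u1). pose proof (Rabs_pos u2). nra. }
  assert (Hcross : Rabs (L0 * eps1) <= a1 * Ub * N * (eta * (a1 + 2*Ub) * N))
    by (apply abs_prod_le; assumption).
  assert (Hcross' : a1 * Ub * N * (eta * (a1 + 2*Ub) * N) <= 2 * a1 * Ub * eta * (a1 + 2*Ub) * E).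
  { replace (a1 * Ub * N * (eta * (a1 + 2*Ub) * N)) with ((a1 * Ub * eta * (a1 + 2*Ub)) * (N * N)) by ring.
    assert (0 <= a1 * Ub * eta * (a1 + 2*Ub)) by (apply Rmult_le_pos; [|lra]; apply Rmult_le_pos; [|lra]; apply Rmult_le_pos; lra).
    nra. }
  assert (Hx : - Rabs (L0 * eps1) <= L0 * eps1) by (pose proof (Rabs_maj2 (L0*eps1)); lra).
  assert (Hy : - Rabs eps2 <= eps2) by (pose proof (Rabs_maj2 eps2); lra).
  assert (Hz : 0 <= eps1^2) by apply pow2_ge_0.
  assert (HCE : eta * C * E <= kap * E) by (apply Rmult_le_compat_r; lra).
  unfold C in HCE.
  replace ((L0 + eps1)^2 + (Q2 + eps2)) with ((L0^2 + Q2) + 2 * (L0 * eps1) + eps1^2 + eps2) by ring.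
  nra.
Qed.

Lemma risk_alg (U1 U2 g A1 A2 B1 B2 C1 C2 : R) :
  let Dl := U1 * ((A1 - B1) / 2) + U2 * ((A2 - B2) / 2) in
  let M := U1 * ((A1 + B1) / 2 - C1) + U2 * ((A2 + B2) / 2 - C2) in
  let o3 := U1 * C1 + U2 * C2 + g in
  / 2 * ((U1 * A1 + U2 * A2 + g - 0) ^ 2 + (U1 * B1 + U2 * B2 + g - 0) ^ 2
         + (U1 * C1 + U2 * C2 + g - 1) ^ 2) - 1 / 3
  = Dl ^ 2 + 2 / 3 * M + M ^ 2 / 3 + (3 * o3 - 1 + 2 * M) ^ 2 / 6.
Proof. intros. unfold Dl, M, o3. field. Qed.

Lemma local_min_core (h f1 f2 f3 : R -> R) (v u1 u2 rho K : R) :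
  0 < rho -> 0 <= K ->
  (forall x, Rabs (x - v) < rho -> is_derive h x (f1 x) /\ is_derive f1 x (f2 x) /\
       is_derive f2 x (f3 x) /\ Rabs (f2 x) <= K /\ Rabs (f3 x) <= K) ->
  (u1 + u2) * h v = 1 / 3 ->
  (u1 * f1 v) ^ 2 + u1 * f2 v / 3 > 0 ->
  u1 * u2 * f2 v * ((f1 v) ^ 2 * (u1 + u2) + f2 v / 3) > 0 ->
  is_local_min (risk h) (Params 0 0 0 0 v v u1 u2 0) /\
  risk h (Params 0 0 0 0 v v u1 u2 0) = 1 / 3.
Proof.
  intros Hrho HK Hball Hsum HP11 Hdet.
  assert (Hrisk : risk h (Params 0 0 0 0 v v u1 u2 0) = 1 / 3).
  { unfold risk, net; simpl.
    replace (0 * 1 + 0 * 0 + v) with v by ring.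
    replace (0 * 0 + 0 * 1 + v) with v by ring.
    replace (0 * (1 / 2) + 0 * (1 / 2) + v) with v by field.
    replace (u1 * h v + u2 * h v + 0) with (1/3) by lra. field. }
  split; [|exact Hrisk].
  assert (HD0 : forall x, Rabs (x - v) < rho -> is_derive h x (f1 x)) by (intros; apply Hball; auto).
  assert (HD1 : forall x, Rabs (x - v) < rho -> is_derive f1 x (f2 x)) by (intros; apply Hball; auto).
  assert (HL1 := lip_ball f1 f2 v rho K ltac:(intros; split; apply Hball; auto)).
  assert (HL2 := lip_ball f2 f3 v rho K ltac:(intros; split; apply Hball; auto)).
  destruct (quad_core (f1 v) (f2 v) u1 u2 HP11 Hdet) as [eta [Heta Hq]].
  set (eps := Rmin (rho / 4) (eta / (2 * K + 1))).
  assert (Heps : 0 < eps).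
  { apply Rmin_pos; [lra|]. apply Rdiv_lt_0_compat; lra. }
  assert (Heps1 : eps <= rho / 4) by apply Rmin_l.
  assert (Heps2 : eps * (2 * K + 1) <= eta).
  { assert (eps <= eta / (2 * K + 1)) by apply Rmin_r.
    apply (Rmult_le_compat_r (2 * K + 1)) in H; [|lra].
    replace (eta / (2 * K + 1) * (2 * K + 1)) with eta in H by (field; lra). exact H. }
  exists eps. split; [exact Heps|].
  intros q Hclose. rewrite Hrisk.
  destruct q as [a11 a12 a21 a22 b1 b2' w1 w2 g].
  unfold params_close in Hclose; simpl in Hclose.
  destruct Hclose as [H11 [H12 [H21 [H22 [Hb1 [Hb2 [Hw1 [Hw2 Hg]]]]]]]].
  rewrite Rminus_0_r in H11, H12, H21, H22.
  set (c1 := b1 + (a11 + a12) / 2). set (e1 := (a11 - a12) / 2).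
  set (c2 := b2' + (a21 + a22) / 2). set (e2 := (a21 - a22) / 2).
  unfold risk, net; simpl.
  replace (a11 * 1 + a12 * 0 + b1) with (c1 + e1) by (unfold c1, e1; field).
  replace (a11 * 0 + a12 * 1 + b1) with (c1 - e1) by (unfold c1, e1; field).
  replace (a11 * (1 / 2) + a12 * (1 / 2) + b1) with c1 by (unfold c1; field).
  replace (a21 * 1 + a22 * 0 + b2') with (c2 + e2) by (unfold c2, e2; field).
  replace (a21 * 0 + a22 * 1 + b2') with (c2 - e2) by (unfold c2, e2; field).
  replace (a21 * (1 / 2) + a22 * (1 / 2) + b2') with c2 by (unfold c2; field).
  assert (Hc1 : Rabs (c1 - v) <= 2 * eps).
  { unfold c1. replace (b1 + (a11 + a12) / 2 - v) with ((b1 - v) + (a11 / 2 + a12 / 2)) by field.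
    eapply Rle_trans; [apply Rabs_triang|]. eapply Rle_trans; [apply Rplus_le_compat_l; apply Rabs_triang|].
    unfold Rdiv. rewrite !Rabs_mult, (Rabs_right (/ 2)) by lra. lra. }
  assert (Hc2 : Rabs (c2 - v) <= 2 * eps).
  { unfold c2. replace (b2' + (a21 + a22) / 2 - v) with ((b2' - v) + (a21 / 2 + a22 / 2)) by field.
    eapply Rle_trans; [apply Rabs_triang|]. eapply Rle_trans; [apply Rplus_le_compat_l; apply Rabs_triang|].
    unfold Rdiv. rewrite !Rabs_mult, (Rabs_right (/ 2)) by lra. lra. }
  assert (He1 : Rabs e1 <= eps).
  { unfold e1. replace ((a11 - a12) / 2) with (a11 / 2 + - (a12 / 2)) by field.
    eapply Rle_trans; [apply Rabs_triang|]. rewrite Rabs_Ropp.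
    unfold Rdiv. rewrite !Rabs_mult, (Rabs_right (/ 2)) by lra. lra. }
  assert (He2 : Rabs e2 <= eps).
  { unfold e2. replace ((a21 - a22) / 2) with (a21 / 2 + - (a22 / 2)) by field.
    eapply Rle_trans; [apply Rabs_triang|]. rewrite Rabs_Ropp.
    unfold Rdiv. rewrite !Rabs_mult, (Rabs_right (/ 2)) by lra. lra. }
  assert (Hce1 : Rabs (c1 - v) + Rabs e1 < rho) by lra.
  assert (Hce2 : Rabs (c2 - v) + Rabs e2 < rho) by lra.
  assert (Hcb1 : Rabs (c1 - v) < rho) by (pose proof (Rabs_pos e1); lra).
  assert (Hcb2 : Rabs (c2 - v) < rho) by (pose proof (Rabs_pos e2); lra).
  assert (Hvb : Rabs (v - v) < rho) by (rewrite Rminus_eq_0, Rabs_R0; lra).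
  pose proof (odd_est h f1 v rho K c1 e1 HK HD0 HL1 Hce1) as Od1.
  pose proof (odd_est h f1 v rho K c2 e2 HK HD0 HL1 Hce2) as Od2.
  pose proof (even_est h f1 f2 v rho K c1 e1 HK HD0 HD1 HL2 Hce1) as Ev1.
  pose proof (even_est h f1 f2 v rho K c2 e2 HK HD0 HD1 HL2 Hce2) as Ev2.
  pose proof (HL1 v c1 Hvb Hcb1) as Lp1. pose proof (HL1 v c2 Hvb Hcb2) as Lp2.
  pose proof (HL2 v c1 Hvb Hcb1) as Lq1. pose proof (HL2 v c2 Hvb Hcb2) as Lq2.
  assert (HKe : K * (2 * eps) <= eta) by nra.
  assert (HKe' : K * eps <= eta) by nra.
  assert (HKr1 : K * (e1 * e1) <= eta * Rabs e1).
  { replace (e1 * e1) with (Rabs e1 * Rabs e1) by (rewrite <- Rabs_mult; apply Rabs_right; nra).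
    replace (K * (Rabs e1 * Rabs e1)) with ((K * Rabs e1) * Rabs e1) by ring.
    apply Rmult_le_compat_r; [apply Rabs_pos|].
    assert (K * Rabs e1 <= K * eps) by (apply Rmult_le_compat_l; lra). lra. }
  assert (HKr2 : K * (e2 * e2) <= eta * Rabs e2).
  { replace (e2 * e2) with (Rabs e2 * Rabs e2) by (rewrite <- Rabs_mult; apply Rabs_right; nra).
    replace (K * (Rabs e2 * Rabs e2)) with ((K * Rabs e2) * Rabs e2) by ring.
    apply Rmult_le_compat_r; [apply Rabs_pos|].
    assert (K * Rabs e2 <= K * eps) by (apply Rmult_le_compat_l; lra). lra. }
  assert (HKs1 : K * (Rabs e1 * (e1 * e1)) <= eta * (e1 * e1)).
  { assert (0 <= e1 * e1) by nra.
    replace (K * (Rabs e1 * (e1 * e1))) with ((K * Rabs e1) * (e1 * e1)) by ring.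
    apply Rmult_le_compat_r; [lra|].
    assert (K * Rabs e1 <= K * eps) by (apply Rmult_le_compat_l; lra). lra. }
  assert (HKs2 : K * (Rabs e2 * (e2 * e2)) <= eta * (e2 * e2)).
  { assert (0 <= e2 * e2) by nra.
    replace (K * (Rabs e2 * (e2 * e2))) with ((K * Rabs e2) * (e2 * e2)) by ring.
    apply Rmult_le_compat_r; [lra|].
    assert (K * Rabs e2 <= K * eps) by (apply Rmult_le_compat_l; lra). lra. }
  assert (Hw1' : Rabs (w1 - u1) <= eta) by nra.
  assert (Hw2' : Rabs (w2 - u2) <= eta) by nra.
  assert (Hp1 : Rabs (f1 c1 - f1 v) <= eta) by nra.
  assert (Hp2 : Rabs (f1 c2 - f1 v) <= eta) by nra.
  assert (Hq1 : Rabs (f2 c1 - f2 v) <= eta) by nra.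
  assert (Hq2 : Rabs (f2 c2 - f2 v) <= eta) by nra.
  pose proof (Hq w1 w2 e1 e2 (f1 c1 - f1 v) (f1 c2 - f1 v) (f2 c1 - f2 v) (f2 c2 - f2 v)
     ((h (c1 + e1) - h (c1 - e1)) / 2 - f1 c1 * e1)
     ((h (c2 + e2) - h (c2 - e2)) / 2 - f1 c2 * e2)
     ((h (c1 + e1) + h (c1 - e1)) / 2 - h c1 - f2 c1 * (e1 * e1) / 2)
     ((h (c2 + e2) + h (c2 - e2)) / 2 - h c2 - f2 c2 * (e2 * e2) / 2)
     Hw1' Hw2' Hp1 Hp2 Hq1 Hq2 ltac:(lra) ltac:(lra) ltac:(lra) ltac:(lra)) as Hmain.
  pose proof (risk_alg w1 w2 g (h (c1 + e1)) (h (c2 + e2)) (h (c1 - e1)) (h (c2 - e2)) (h c1) (h c2)) as Halg.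
  simpl in Halg.
  set (Dl := w1 * ((h (c1 + e1) - h (c1 - e1)) / 2) + w2 * ((h (c2 + e2) - h (c2 - e2)) / 2)) in *.
  set (M := w1 * ((h (c1 + e1) + h (c1 - e1)) / 2 - h c1) + w2 * ((h (c2 + e2) + h (c2 - e2)) / 2 - h c2)) in *.
  assert (E1 : w1 * ((f1 v + (f1 c1 - f1 v)) * e1 + ((h (c1 + e1) - h (c1 - e1)) / 2 - f1 c1 * e1)) +
     w2 * ((f1 v + (f1 c2 - f1 v)) * e2 + ((h (c2 + e2) - h (c2 - e2)) / 2 - f1 c2 * e2)) = Dl)
    by (unfold Dl; field).
  assert (E2 : w1 * ((f2 v + (f2 c1 - f2 v)) * (e1 * e1) / 2 + ((h (c1 + e1) + h (c1 - e1)) / 2 - h c1 - f2 c1 * (e1 * e1) / 2)) +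
     w2 * ((f2 v + (f2 c2 - f2 v)) * (e2 * e2) / 2 + ((h (c2 + e2) + h (c2 - e2)) / 2 - h c2 - f2 c2 * (e2 * e2) / 2)) = M)
    by (unfold M; field).
  rewrite E1, E2 in Hmain.
  pose proof (pow2_ge_0 M). pose proof (pow2_ge_0 (3 * (w1 * h c1 + w2 * h c2 + g) - 1 + 2 * M)).
  lra.
Qed.

Lemma risk_nonneg h q : 0 <= risk h q.
Proof.
  unfold risk. pose proof (pow2_ge_0 (net h q 1 0 - 0)). pose proof (pow2_ge_0 (net h q 0 1 - 0)).
  pose proof (pow2_ge_0 (net h q (1/2) (1/2) - 1)). lra.
Qed.

Lemma global_from_i (h : R -> R) (v1 v2 v3 v4 : R) :
  h v1 * h v4 = h v2 * h v3 ->
  h v1 * h ((v3 + v4) / 2) <> h v3 * h ((v1 + v2) / 2) ->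
  exists p, is_global_min (risk h) p /\ risk h p = 0.
Proof.
  intros E1 E2.
  set (k := / (h v3 * h ((v1 + v2) / 2) - h v1 * h ((v3 + v4) / 2))).
  assert (Hk : k * (h v3 * h ((v1 + v2) / 2) - h v1 * h ((v3 + v4) / 2)) = 1).
  { unfold k. field. intro H. apply E2. lra. }
  exists (Params v1 v2 v3 v4 0 0 (k * h v3) (- (k * h v1)) 0).
  assert (R0 : risk h (Params v1 v2 v3 v4 0 0 (k * h v3) (- (k * h v1)) 0) = 0).
  { unfold risk, net; simpl.
    replace (v1 * 1 + v2 * 0 + 0) with v1 by ring.
    replace (v3 * 1 + v4 * 0 + 0) with v3 by ring.
    replace (v1 * 0 + v2 * 1 + 0) with v2 by ring.
    replace (v3 * 0 + v4 * 1 + 0) with v4 by ring.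
    replace (v1 * (1 / 2) + v2 * (1 / 2) + 0) with ((v1 + v2) / 2) by field.
    replace (v3 * (1 / 2) + v4 * (1 / 2) + 0) with ((v3 + v4) / 2) by field.
    replace (k * h v3 * h v1 + - (k * h v1) * h v3 + 0 - 0) with 0 by ring.
    replace (k * h v3 * h v2 + - (k * h v1) * h v4 + 0 - 0) with (k * (h v2 * h v3 - h v1 * h v4)) by ring.
    rewrite E1.
    replace (k * h v3 * h ((v1 + v2) / 2) + - (k * h v1) * h ((v3 + v4) / 2) + 0 - 1) with 0 by lra.
    field. }
  split; [|exact R0].
  intros q. rewrite R0. apply risk_nonneg.
Qed.

Lemma master (h : R -> R) (f : nat -> R -> R) (v rho c K u1 u2 : R) :
  0 < rho -> 0 <= K -> 0 < c ->
  (forall x, Rabs (x - v) < rho -> h x = f O x) ->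
  (forall n x, Rabs (x - v) < rho -> is_derive (f n) x (f (S n) x)) ->
  (forall n, (1 <= n)%nat -> Rabs (f n v) <= c ^ n * INR (Factorial.fact n)) ->
  (forall x, Rabs (x - v) < rho -> Rabs (f 2%nat x) <= K /\ Rabs (f 3%nat x) <= K) ->
  (u1 + u2) * h v = 1 / 3 ->
  (u1 * f 1%nat v) ^ 2 + u1 * f 2%nat v / 3 > 0 ->
  u1 * u2 * f 2%nat v * ((f 1%nat v) ^ 2 * (u1 + u2) + f 2%nat v / 3) > 0 ->
  (exists v1 v2 v3 v4 : R,
     h v1 * h v4 = h v2 * h v3 /\
     h v1 * h ((v3 + v4) / 2) <> h v3 * h ((v1 + v2) / 2)) ->
  (exists v1 v2 v3 v4 : R,
     h v1 * h v4 = h v2 * h v3 /\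
     h v1 * h ((v3 + v4) / 2) <> h v3 * h ((v1 + v2) / 2)) /\
  (exists v1 v2 u1 u2 : R,
     u1 * h v1 + u2 * h v2 = 1 / 3 /\
     smooth_at h v1 /\ smooth_at h v2 /\
     (exists c : R, 0 < c /\
        forall n : nat, (1 <= n)%nat ->
          Rabs (Derive_n h n v1) <= c ^ n * INR (Factorial.fact n) /\
          Rabs (Derive_n h n v2) <= c ^ n * INR (Factorial.fact n)) /\
     (u1 * Derive_n h 1 v1) ^ 2 + u1 * Derive_n h 2 v1 / 3 > 0 /\
     (u1 * Derive_n h 1 v1 * (u2 * Derive_n h 1 v2)) ^ 2 <
       ((u1 * Derive_n h 1 v1) ^ 2 + u1 * Derive_n h 2 v1 / 3) *
       ((u2 * Derive_n h 1 v2) ^ 2 + u2 * Derive_n h 2 v2 / 3)) /\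
  (exists p : params, is_global_min (risk h) p /\ risk h p = 0) /\
  (exists p : params, is_local_min (risk h) p /\ risk h p = 1 / 3).
Proof.
  intros Hrho HK Hc H0 HD Hbnd HK23 Hsum HP11 Hdet Hi.
  assert (Hv : Rabs (v - v) < rho) by (rewrite Rminus_eq_0, Rabs_R0; lra).
  pose proof (family_derive h f v rho H0 HD) as Hfam.
  assert (HDn : forall n, Derive_n h n v = f n v) by (intros n; apply (Hfam n v Hv)).
  assert (Hsm : smooth_at h v) by (intros n; apply (Hfam n v Hv)).
  split; [exact Hi|]. split.
  { exists v, v, u1, u2. rewrite !HDn. split; [lra|]. split; [exact Hsm|]. split; [exact Hsm|].
    split. { exists c. split; [exact Hc|]. intros n Hn. rewrite HDn. split; apply Hbnd; exact Hn. }
    split; [exact HP11|].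
    set (d1 := f 1%nat v) in *. set (d2 := f 2%nat v) in *.
    assert (Id : ((u1 * d1) ^ 2 + u1 * d2 / 3) * ((u2 * d1) ^ 2 + u2 * d2 / 3) - (u1 * d1 * (u2 * d1)) ^ 2
              = u1 * u2 * d2 * (d1 ^ 2 * (u1 + u2) + d2 / 3) / 3) by field.
    lra. }
  split.
  { destruct Hi as [v1 [v2 [v3 [v4 [E1 E2]]]]]. exact (global_from_i h v1 v2 v3 v4 E1 E2). }
  exists (Params 0 0 0 0 v v u1 u2 0).
  apply (local_min_core h (f 1%nat) (f 2%nat) (f 3%nat) v u1 u2 rho K Hrho HK); [|exact Hsum|exact HP11|exact Hdet].
  intros x Hx. repeat split; try apply HD; try apply HK23; try exact Hx.
  apply (is_derive_ext_loc (f O) h).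
  - eapply filter_imp; [|apply (ball_locally v rho x Hx)]. intros t Ht. symmetry. apply H0; exact Ht.
  - apply HD; exact Hx.
Qed.

Definition fquad (n : nat) (x : R) : R :=
  match n with O => x ^ 2 | 1%nat => 2 * x | 2%nat => 2 | _ => 0 end.

Lemma fact_pos_R n : 0 < INR (Factorial.fact n).
Proof. apply lt_0_INR. apply Factorial.lt_O_fact. Qed.

Lemma quad_case : let h := quadR in
  (exists v1 v2 v3 v4 : R,
     h v1 * h v4 = h v2 * h v3 /\
     h v1 * h ((v3 + v4) / 2) <> h v3 * h ((v1 + v2) / 2)) /\
  (exists v1 v2 u1 u2 : R,
     u1 * h v1 + u2 * h v2 = 1 / 3 /\
     smooth_at h v1 /\ smooth_at h v2 /\
     (exists c : R, 0 < c /\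
        forall n : nat, (1 <= n)%nat ->
          Rabs (Derive_n h n v1) <= c ^ n * INR (Factorial.fact n) /\
          Rabs (Derive_n h n v2) <= c ^ n * INR (Factorial.fact n)) /\
     (u1 * Derive_n h 1 v1) ^ 2 + u1 * Derive_n h 2 v1 / 3 > 0 /\
     (u1 * Derive_n h 1 v1 * (u2 * Derive_n h 1 v2)) ^ 2 <
       ((u1 * Derive_n h 1 v1) ^ 2 + u1 * Derive_n h 2 v1 / 3) *
       ((u2 * Derive_n h 1 v2) ^ 2 + u2 * Derive_n h 2 v2 / 3)) /\
  (exists p : params, is_global_min (risk h) p /\ risk h p = 0) /\
  (exists p : params, is_local_min (risk h) p /\ risk h p = 1 / 3).
Proof.
  intros h.
  apply (master h fquad 1 1 2 2 (1/6) (1/6)); try lra.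
  - intros x _. reflexivity.
  - intros n x _. destruct n as [|[|[|n]]]; unfold fquad.
    + apply isd_ext with (f := fun t => t * t) (l := 1 * x + x * 1).
      { intros; ring. } { ring. } apply isd_mult; apply isd_id.
    + apply isd_ext with (f := fun t => 2 * t) (l := 2 * 1).
      { intros; ring. } { ring. } apply is_derive_scal; apply isd_id.
    + apply isd_const.
    + apply isd_const.
  - intros n Hn. pose proof (fact_pos_R n). destruct n as [|[|[|n]]]; try lia.
    + simpl. rewrite Rabs_right by lra. lra.
    + simpl. rewrite Rabs_right by lra. lra.
    + change (fquad (S (S (S n))) 1) with 0.
      rewrite Rabs_R0. apply Rmult_le_pos; [|lra]. apply pow_le; lra.
  - intros x _. simpl. rewrite Rabs_R0, Rabs_right by lra. lra.
  - unfold h, quadR. simpl. lra.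
  - simpl. lra.
  - simpl. lra.
  - exists 1, 1, 1, (-1). unfold h, quadR. simpl. split; [ring|].
    replace ((1 + -1) / 2) with 0 by field. replace ((1 + 1) / 2) with 1 by field. lra.
Qed.

Lemma fact_ge1_R n : 1 <= INR (Factorial.fact n).
Proof. change 1 with (INR 1). apply le_INR. pose proof (Factorial.lt_O_fact n). lia. Qed.

Lemma elu_pos l a x : 0 <= x -> elu l a x = l * x.
Proof. intros H. unfold elu. destruct (Rle_dec 0 x); [reflexivity|lra]. Qed.
Lemma elu_neg l a x : x < 0 -> elu l a x = l * a * (exp x - 1).
Proof. intros H. unfold elu. destruct (Rle_dec 0 x); [lra|reflexivity]. Qed.

Definition felu (L : R) (n : nat) (x : R) : R :=
  match n with O => L * (exp x - 1) | S _ => L * exp x end.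

Lemma elu_case (lambda alpha : R) : 0 < alpha -> 1 <= lambda -> let h := elu lambda alpha in
  (exists v1 v2 v3 v4 : R,
     h v1 * h v4 = h v2 * h v3 /\
     h v1 * h ((v3 + v4) / 2) <> h v3 * h ((v1 + v2) / 2)) /\
  (exists v1 v2 u1 u2 : R,
     u1 * h v1 + u2 * h v2 = 1 / 3 /\
     smooth_at h v1 /\ smooth_at h v2 /\
     (exists c : R, 0 < c /\
        forall n : nat, (1 <= n)%nat ->
          Rabs (Derive_n h n v1) <= c ^ n * INR (Factorial.fact n) /\
          Rabs (Derive_n h n v2) <= c ^ n * INR (Factorial.fact n)) /\
     (u1 * Derive_n h 1 v1) ^ 2 + u1 * Derive_n h 2 v1 / 3 > 0 /\
     (u1 * Derive_n h 1 v1 * (u2 * Derive_n h 1 v2)) ^ 2 <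
       ((u1 * Derive_n h 1 v1) ^ 2 + u1 * Derive_n h 2 v1 / 3) *
       ((u2 * Derive_n h 1 v2) ^ 2 + u2 * Derive_n h 2 v2 / 3)) /\
  (exists p : params, is_global_min (risk h) p /\ risk h p = 0) /\
  (exists p : params, is_local_min (risk h) p /\ risk h p = 1 / 3).
Proof.
  intros Ha Hl h.
  set (L := lambda * alpha).
  assert (HL : 0 < L) by (unfold L; nra).
  set (v := ln (3/4)).
  assert (Hv : v < 0) by (unfold v; rewrite <- ln_1; apply ln_increasing; lra).
  assert (Hev : exp v = 3/4) by (unfold v; apply exp_ln; lra).
  apply (master h (felu L) v (- v / 2) (L + 1) L 1 (- 4 / (3 * L) - 1)); try lra.
  - intros x Hx. apply Rabs_def2 in Hx. unfold h, felu. rewrite elu_neg by lra. reflexivity.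
  - intros n x _. destruct n as [|n]; unfold felu.
    + apply isd_ext with (f := fun t => L * (exp t - 1)) (l := L * (exp x - 0)); [reflexivity|ring|].
      apply is_derive_scal. apply isd_minus; [apply is_derive_exp|apply isd_const].
    + apply is_derive_scal. apply is_derive_exp.
  - intros n Hn. destruct n as [|n]; [lia|]. unfold felu. rewrite Hev.
    rewrite Rabs_right by lra.
    pose proof (Rle_pow (L + 1) 1 (S n) ltac:(lra) Hn). rewrite pow_1 in H.
    pose proof (fact_ge1_R (S n)).
    assert (0 <= (L + 1) ^ S n) by (apply pow_le; lra).
    assert ((L + 1) ^ S n * 1 <= (L + 1) ^ S n * INR (Factorial.fact (S n))) by (apply Rmult_le_compat_l; lra).
    lra.
  - intros x Hx. apply Rabs_def2 in Hx. unfold felu.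
    assert (exp x < 1) by (rewrite <- exp_0; apply exp_increasing; lra).
    pose proof (exp_pos x).
    rewrite Rabs_right by nra. nra.
  - unfold h. rewrite elu_neg by lra. rewrite Hev. fold L. field. lra.
  - unfold felu. rewrite Hev. nra.
  - unfold felu. rewrite Hev.
    replace ((L * (3 / 4)) ^ 2 * (1 + (-4 / (3 * L) - 1)) + L * (3 / 4) / 3) with (- L / 2) by (field; lra).
    assert (- 4 / (3 * L) < 0) by (apply Rdiv_neg_pos; lra || nra).
    nra.
  - exists 1, 0, (-2), 0. unfold h.
    replace ((-2 + 0) / 2) with (-1) by field. replace ((1 + 0) / 2) with (1/2) by field.
    rewrite (elu_pos _ _ 1), (elu_pos _ _ 0), (elu_pos _ _ (1/2)), (elu_neg _ _ (-1)), (elu_neg _ _ (-2)) by lra.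
    split; [ring|].
    replace (-2) with (-1 + -1) by ring. rewrite exp_plus.
    assert (exp (-1) < 1) by (rewrite <- exp_0; apply exp_increasing; lra).
    intro Heq.
    set (E1 := exp (-1)) in *.
    assert (Hz : lambda * (lambda * alpha) * ((E1 - 1) ^ 2) = 0) by nra.
    assert (lambda * (lambda * alpha) > 0) by (apply Rmult_lt_0_compat; [lra| apply Rmult_lt_0_compat; lra]).
    assert ((E1 - 1) ^ 2 > 0) by nra.
    nra.
Qed.

Fixpoint pmul (p q : list R) : list R :=
  match p with nil => nil | a :: p' => padd (pscal a q) (0 :: pmul p' q) end.

Lemma peval_pmul p q x : peval (pmul p q) x = peval p x * peval q x.
Proof.
  induction p as [|a p IH]; simpl; [ring|].
  rewrite peval_padd, peval_pscal. simpl. rewrite IH. ring.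
Qed.

Lemma norm1_pmul p q : norm1 (pmul p q) <= norm1 p * norm1 q.
Proof.
  induction p as [|a p IH]; simpl; [lra|].
  eapply Rle_trans; [apply norm1_padd|]. rewrite norm1_pscal. simpl. rewrite Rabs_R0.
  pose proof (norm1_nonneg q). lra.
Qed.

Lemma length_pmul p q : (length (pmul p q) <= length p + length q)%nat.
Proof.
  induction p as [|a p IH]; simpl; [lia|].
  rewrite length_padd, length_pscal. simpl. lia.
Qed.

Fixpoint PF (D : list R) (n : nat) : list R :=
  match n with O => 0 :: 1 :: nil | S n => pmul (pder (PF D n)) D end.

Lemma PF_length D n : (length D <= 3)%nat -> (length (PF D n) <= 3 * n + 2)%nat.
Proof.
  intros HD. induction n as [|n IH]; simpl; [lia|].
  pose proof (length_pmul (pder (PF D n)) D). pose proof (length_pder (PF D n)). lia.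
Qed.

Lemma PF_norm D n : (length D <= 3)%nat -> norm1 D <= 2 ->
  norm1 (PF D n) <= 6 ^ n * INR (Factorial.fact n).
Proof.
  intros HD HN. induction n as [|n IH].
  - simpl. rewrite Rabs_R0, Rabs_R1. lra.
  - simpl PF. eapply Rle_trans; [apply norm1_pmul|].
    pose proof (norm1_pder (PF D n)). pose proof (PF_length D n HD).
    pose proof (norm1_nonneg (PF D n)). pose proof (norm1_nonneg (pder (PF D n))).
    pose proof (norm1_nonneg D).
    assert (HL : INR (length (PF D n)) <= 3 * INR n + 2).
    { replace (3 * INR n + 2) with (INR (3 * n + 2)) by (rewrite plus_INR, mult_INR; simpl; ring).
      apply le_INR; lia. }
    assert (Hpos : 0 <= INR n) by apply pos_INR.
    change (Factorial.fact (S n)) with ((S n) * Factorial.fact n)%nat.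
    rewrite mult_INR, S_INR. simpl pow.
    assert (norm1 (pder (PF D n)) <= (3 * INR n + 2) * norm1 (PF D n)) by nra.
    assert (norm1 (pder (PF D n)) * norm1 D <= (3 * INR n + 2) * norm1 (PF D n) * 2) by nra.
    assert (0 <= 6 ^ n * INR (Factorial.fact n)) by (apply Rmult_le_pos; [apply pow_le; lra|apply pos_INR]).
    nra.
Qed.

Definition gfam (g : R -> R) (D : list R) (n : nat) (x : R) : R := peval (PF D n) (g x).

Lemma gfam_derive g D n x : is_derive g x (peval D (g x)) ->
  is_derive (gfam g D n) x (gfam g D (S n) x).
Proof.
  intros Hg. unfold gfam. simpl PF. rewrite peval_pmul.
  apply isd_ext with (f := fun t => peval (PF D n) (g t)) (l := peval D (g x) * peval (pder (PF D n)) (g x)).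
  - reflexivity.
  - ring.
  - apply isd_comp; [apply peval_derive|exact Hg].
Qed.

Lemma gfam_bound g D n x : (length D <= 3)%nat -> norm1 D <= 2 -> Rabs (g x) <= 1 ->
  Rabs (gfam g D n x) <= 6 ^ n * INR (Factorial.fact n).
Proof.
  intros HD HN Hg. unfold gfam. eapply Rle_trans; [apply peval_bound; exact Hg|].
  apply PF_norm; assumption.
Qed.

Lemma sigmoid_derive x : is_derive sigmoid x (sigmoid x * (1 - sigmoid x)).
Proof.
  unfold sigmoid. pose proof (exp_pos (- x)).
  auto_derive.
  - lra.
  - field. lra.
Qed.

Lemma sig_ln t : 0 < t -> sigmoid (ln t) = t / (1 + t).
Proof. intros Ht. unfold sigmoid. rewrite exp_Ropp, exp_ln by exact Ht. field. lra. Qed.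

Lemma mid_ln a b m : 0 < a -> 0 < b -> 0 < m -> a * b = m * m -> (ln a + ln b) / 2 = ln m.
Proof.
  intros Ha Hb Hm E. rewrite <- ln_mult by assumption. rewrite E, ln_mult by assumption. field.
Qed.

Lemma sigmoid_bound x : Rabs (sigmoid x) <= 1.
Proof.
  unfold sigmoid. pose proof (exp_pos (- x)).
  assert (0 < 1 / (1 + exp (- x))) by (apply Rdiv_lt_0_compat; lra).
  assert (1 / (1 + exp (- x)) <= 1).
  { unfold Rdiv. rewrite Rmult_1_l. rewrite <- Rinv_1. apply Rinv_le_contravar; lra. }
  rewrite Rabs_right; lra.
Qed.

Definition Dsig : list R := 0 :: 1 :: -1 :: nil.

Lemma sigmoid_case : let h := sigmoid in
  (exists v1 v2 v3 v4 : R,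
     h v1 * h v4 = h v2 * h v3 /\
     h v1 * h ((v3 + v4) / 2) <> h v3 * h ((v1 + v2) / 2)) /\
  (exists v1 v2 u1 u2 : R,
     u1 * h v1 + u2 * h v2 = 1 / 3 /\
     smooth_at h v1 /\ smooth_at h v2 /\
     (exists c : R, 0 < c /\
        forall n : nat, (1 <= n)%nat ->
          Rabs (Derive_n h n v1) <= c ^ n * INR (Factorial.fact n) /\
          Rabs (Derive_n h n v2) <= c ^ n * INR (Factorial.fact n)) /\
     (u1 * Derive_n h 1 v1) ^ 2 + u1 * Derive_n h 2 v1 / 3 > 0 /\
     (u1 * Derive_n h 1 v1 * (u2 * Derive_n h 1 v2)) ^ 2 <
       ((u1 * Derive_n h 1 v1) ^ 2 + u1 * Derive_n h 2 v1 / 3) *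
       ((u2 * Derive_n h 1 v2) ^ 2 + u2 * Derive_n h 2 v2 / 3)) /\
  (exists p : params, is_global_min (risk h) p /\ risk h p = 0) /\
  (exists p : params, is_local_min (risk h) p /\ risk h p = 1 / 3).
Proof.
  intros h.
  set (v := - ln 2).
  assert (Hsv : sigmoid v = 1 / 3).
  { unfold v, sigmoid. rewrite Ropp_involutive, exp_ln by lra. field. }
  assert (HLD : (length Dsig <= 3)%nat) by (simpl; lia).
  assert (HND : norm1 Dsig <= 2).
  { simpl. rewrite Rabs_R0, Rabs_R1, (Rabs_left (-1)) by lra. lra. }
  assert (E1 : gfam sigmoid Dsig 1 v = 2 / 9) by (unfold gfam; simpl; rewrite Hsv; field).
  assert (E2 : gfam sigmoid Dsig 2 v = 2 / 27) by (unfold gfam; simpl; rewrite Hsv; field).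
  apply (master h (gfam sigmoid Dsig) v 1 6 1296 (1/2) (1/2)); try lra.
  - intros x _. unfold gfam, h. simpl. ring.
  - intros n x _. apply gfam_derive. unfold Dsig. simpl.
    apply isd_ext with (f := sigmoid) (l := sigmoid x * (1 - sigmoid x)); [reflexivity|ring|].
    apply sigmoid_derive.
  - intros n _. apply gfam_bound; auto. apply sigmoid_bound.
  - intros x _. split.
    + eapply Rle_trans; [apply gfam_bound; auto; apply sigmoid_bound|]. simpl. lra.
    + eapply Rle_trans; [apply gfam_bound; auto; apply sigmoid_bound|]. simpl. lra.
  - unfold h. rewrite Hsv. lra.
  - rewrite E1, E2. lra.
  - rewrite E1, E2. lra.
  - exists (ln 1), (ln (1/4)), (ln 9), (ln (9/16)). unfold h.
    rewrite (mid_ln 9 (9/16) (9/4)) by lra. rewrite (mid_ln 1 (1/4) (1/2)) by lra.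
    rewrite !sig_ln by lra. split.
    + field.
    + intro H. field_simplify in H. lra.
Qed.

Lemma tanh_E x : tanhR x = (exp x * exp x - 1) / (exp x * exp x + 1).
Proof.
  unfold tanhR. rewrite exp_Ropp. pose proof (exp_pos x). field.
  split; [nra|]. intro H1. assert (0 < exp x + / exp x) by (pose proof (Rinv_0_lt_compat _ H); lra). lra.
Qed.

Lemma tanh_derive x : is_derive tanhR x (1 - tanhR x * tanhR x).
Proof.
  unfold tanhR. pose proof (exp_pos x). pose proof (exp_pos (- x)).
  auto_derive.
  - lra.
  - field. lra.
Qed.

Lemma tanh_bound x : Rabs (tanhR x) <= 1.
Proof.
  rewrite tanh_E. pose proof (exp_pos x). set (E := exp x * exp x).
  assert (0 < E) by (unfold E; nra).
  apply Rabs_le. split.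
  - apply (Rmult_le_reg_r (E + 1)); [lra|]. unfold Rdiv. rewrite Rmult_assoc, Rinv_l by lra. lra.
  - apply (Rmult_le_reg_r (E + 1)); [lra|]. unfold Rdiv. rewrite Rmult_assoc, Rinv_l by lra. lra.
Qed.

Definition Dtanh : list R := 1 :: 0 :: -1 :: nil.

Lemma tanh_case : let h := tanhR in
  (exists v1 v2 v3 v4 : R,
     h v1 * h v4 = h v2 * h v3 /\
     h v1 * h ((v3 + v4) / 2) <> h v3 * h ((v1 + v2) / 2)) /\
  (exists v1 v2 u1 u2 : R,
     u1 * h v1 + u2 * h v2 = 1 / 3 /\
     smooth_at h v1 /\ smooth_at h v2 /\
     (exists c : R, 0 < c /\
        forall n : nat, (1 <= n)%nat ->
          Rabs (Derive_n h n v1) <= c ^ n * INR (Factorial.fact n) /\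
          Rabs (Derive_n h n v2) <= c ^ n * INR (Factorial.fact n)) /\
     (u1 * Derive_n h 1 v1) ^ 2 + u1 * Derive_n h 2 v1 / 3 > 0 /\
     (u1 * Derive_n h 1 v1 * (u2 * Derive_n h 1 v2)) ^ 2 <
       ((u1 * Derive_n h 1 v1) ^ 2 + u1 * Derive_n h 2 v1 / 3) *
       ((u2 * Derive_n h 1 v2) ^ 2 + u2 * Derive_n h 2 v2 / 3)) /\
  (exists p : params, is_global_min (risk h) p /\ risk h p = 0) /\
  (exists p : params, is_local_min (risk h) p /\ risk h p = 1 / 3).
Proof.
  intros h.
  set (v := ln (6/5)).
  assert (Htv : tanhR v = 11 / 61).
  { rewrite tanh_E. unfold v. rewrite exp_ln by lra. field. }
  assert (HLD : (length Dtanh <= 3)%nat) by (simpl; lia).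
  assert (HND : norm1 Dtanh <= 2).
  { simpl. rewrite Rabs_R0, Rabs_R1, (Rabs_left (-1)) by lra. lra. }
  assert (E1 : gfam tanhR Dtanh 1 v = 1 - (11/61) * (11/61)) by (unfold gfam; simpl; rewrite Htv; field).
  assert (E2 : gfam tanhR Dtanh 2 v = - 2 * (11/61) * (1 - (11/61) * (11/61))) by (unfold gfam; simpl; rewrite Htv; field).
  apply (master h (gfam tanhR Dtanh) v 1 6 1296 (-1) (94/33)); try lra.
  - intros x _. unfold gfam, h. simpl. ring.
  - intros n x _. apply gfam_derive. unfold Dtanh. simpl.
    apply isd_ext with (f := tanhR) (l := 1 - tanhR x * tanhR x); [reflexivity|ring|].
    apply tanh_derive.
  - intros n _. apply gfam_bound; auto. apply tanh_bound.
  - intros x _. split.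
    + eapply Rle_trans; [apply gfam_bound; auto; apply tanh_bound|]. simpl. lra.
    + eapply Rle_trans; [apply gfam_bound; auto; apply tanh_bound|]. simpl. lra.
  - unfold h. rewrite Htv. lra.
  - rewrite E1, E2. lra.
  - rewrite E1, E2. lra.
  - exists 2, 0, 4, 0. unfold h.
    replace ((4 + 0) / 2) with 2 by field. replace ((2 + 0) / 2) with 1 by field.
    assert (T0 : tanhR 0 = 0) by (rewrite tanh_E, exp_0; field).
    rewrite T0. split; [ring|].
    rewrite !tanh_E.
    set (a := exp 1).
    assert (Ha : 1 < a) by (unfold a; pose proof (exp_increasing 0 1 ltac:(lra)); rewrite exp_0 in H; exact H).
    assert (X2 : exp 2 = a * a) by (unfold a; rewrite <- exp_plus; f_equal; ring).
    assert (X4 : exp 4 = (a * a) * (a * a)) by (rewrite <- X2, <- exp_plus; f_equal; ring).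
    rewrite X2, X4.
    set (w := a * a). assert (Hw : 1 < w) by (unfold w; nra).
    assert (Hnum : (w*w-1)*(w*w-1)*(w*w*w*w+1)*(w+1) - (w*w*w*w-1)*(w-1)*(w*w+1)*(w*w+1)
                   = 2*w*(w*w-1)*((w-1)*(w-1))*(w*w*w-1)) by ring.
    assert (Hpos : 0 < 2*w*(w*w-1)*((w-1)*(w-1))*(w*w*w-1)).
    { assert (0 < w*w-1) by nra. assert (0 < (w-1)*(w-1)) by nra. assert (0 < w*w*w-1) by nra.
      repeat apply Rmult_lt_0_compat; lra. }
    intro Heq.
    replace ((w * w - 1) / (w * w + 1) * ((w * w - 1) / (w * w + 1))) with
      ((w*w-1)*(w*w-1)*(w*w*w*w+1)*(w+1) / ((w*w+1)*(w*w+1)*(w*w*w*w+1)*(w+1))) in Heq by (field; nra).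
    replace ((w * w * (w * w) - 1) / (w * w * (w * w) + 1) * ((w - 1) / (w + 1))) with
      ((w*w*w*w-1)*(w-1)*(w*w+1)*(w*w+1) / ((w*w+1)*(w*w+1)*(w*w*w*w+1)*(w+1))) in Heq by (field; nra).
    assert (Hden : 0 < (w*w+1)*(w*w+1)*(w*w*w*w+1)*(w+1)) by (repeat apply Rmult_lt_0_compat; nra).
    apply (Rmult_eq_compat_r ((w*w+1)*(w*w+1)*(w*w*w*w+1)*(w+1))) in Heq.
    unfold Rdiv in Heq. rewrite !Rmult_assoc, !Rinv_l in Heq by lra. lra.
Qed.

Fixpoint AP (n : nat) : list R :=
  match n with
  | O => 1 :: nil
  | S m => padd (padd (pder (AP m)) (0 :: 0 :: pder (AP m))) (pscal (-2 * INR (S m)) (0 :: AP m))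
  end.

Definition fat (n : nat) (x : R) : R :=
  match n with O => atan x | S m => peval (AP m) x * (/ (1 + x ^ 2)) ^ (S m) end.

Lemma AP_length n : (length (AP n) <= 2 * n + 1)%nat.
Proof.
  induction n as [|n IH]; [simpl; lia|]. cbn [AP].
  rewrite !length_padd, length_pscal. cbn [length]. pose proof (length_pder (AP n)). lia.
Qed.

Lemma AP_norm n : norm1 (AP n) <= 6 ^ n * INR (Factorial.fact n).
Proof.
  induction n as [|n IH].
  - simpl. rewrite Rabs_R1. lra.
  - cbn [AP].
    eapply Rle_trans; [apply norm1_padd|].
    pose proof (norm1_padd (pder (AP n)) (0 :: 0 :: pder (AP n))) as H1.
    rewrite norm1_pscal. cbn [norm1] in *. rewrite !Rabs_R0 in *.
    pose proof (norm1_pder (AP n)). pose proof (AP_length n).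
    pose proof (norm1_nonneg (AP n)).
    assert (HL : INR (length (AP n)) <= 2 * INR n + 1).
    { replace (2 * INR n + 1) with (INR (2 * n + 1)) by (rewrite plus_INR, mult_INR; simpl; ring).
      apply le_INR; lia. }
    assert (Hpos : 0 <= INR n) by apply pos_INR.
    assert (Habs : Rabs (-2 * INR (S n)) = 2 * (INR n + 1)).
    { rewrite S_INR, Rabs_left by lra. ring. }
    rewrite Habs.
    change (Factorial.fact (S n)) with ((S n) * Factorial.fact n)%nat.
    rewrite mult_INR, S_INR. simpl pow.
    assert (norm1 (pder (AP n)) <= (2 * INR n + 1) * norm1 (AP n)) by nra.
    assert (0 <= 6 ^ n * INR (Factorial.fact n)) by (apply Rmult_le_pos; [apply pow_le; lra|apply pos_INR]).
    nra.
Qed.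

Lemma fat_derive n x : is_derive (fat n) x (fat (S n) x).
Proof.
  assert (Hx : 0 < 1 + x ^ 2) by (pose proof (pow2_ge_0 x); lra).
  destruct n as [|m].
  - unfold fat. simpl. apply is_derive_Reals.
    replace ((1 + x * 0) * (/ (1 + x * (x * 1)) * 1)) with (/ (1 + x ^ 2)) by (simpl; field; simpl in Hx; lra).
    apply derivable_pt_lim_atan.
  - unfold fat.
    assert (Hy : is_derive (fun t => / (1 + t ^ 2)) x (- (2 * x) / (1 + x ^ 2) ^ 2)).
    { apply (is_derive_inv (fun t => 1 + t ^ 2)); [|lra].
      auto_derive; [exact I|ring]. }
    pose proof (is_derive_pow (fun t => / (1 + t ^ 2)) (S m) x _ Hy) as Hp.
    pose proof (isd_mult (peval (AP m)) (fun t => (/ (1 + t ^ 2)) ^ S m) x _ _ (peval_derive (AP m) x) Hp) as Hm.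
    eapply isd_ext; [intros t; reflexivity| |exact Hm].
    cbn [AP]. rewrite !peval_padd, peval_pscal. cbn [peval]. simpl Init.Nat.pred.
    rewrite S_INR. simpl pow. field. lra.
Qed.

Lemma fat_bound m x : Rabs x <= 1 -> Rabs (fat (S m) x) <= 6 ^ m * INR (Factorial.fact m).
Proof.
  intros Hx. unfold fat. rewrite Rabs_mult.
  assert (Hy : 0 < / (1 + x ^ 2) <= 1).
  { pose proof (pow2_ge_0 x). split; [apply Rinv_0_lt_compat; lra|].
    rewrite <- Rinv_1. apply Rinv_le_contravar; lra. }
  assert (Hyn : Rabs ((/ (1 + x ^ 2)) ^ S m) <= 1).
  { rewrite Rabs_right by (apply Rle_ge, pow_le; lra). apply Rle_trans with (1 ^ S m); [apply pow_incr; lra | rewrite pow1; lra]. }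
  pose proof (peval_bound (AP m) x Hx). pose proof (AP_norm m).
  pose proof (Rabs_pos (peval (AP m) x)). pose proof (Rabs_pos ((/ (1 + x ^ 2)) ^ S m)).
  nra.
Qed.

Lemma atan_case : let h := atan in
  (exists v1 v2 v3 v4 : R,
     h v1 * h v4 = h v2 * h v3 /\
     h v1 * h ((v3 + v4) / 2) <> h v3 * h ((v1 + v2) / 2)) /\
  (exists v1 v2 u1 u2 : R,
     u1 * h v1 + u2 * h v2 = 1 / 3 /\
     smooth_at h v1 /\ smooth_at h v2 /\
     (exists c : R, 0 < c /\
        forall n : nat, (1 <= n)%nat ->
          Rabs (Derive_n h n v1) <= c ^ n * INR (Factorial.fact n) /\
          Rabs (Derive_n h n v2) <= c ^ n * INR (Factorial.fact n)) /\
     (u1 * Derive_n h 1 v1) ^ 2 + u1 * Derive_n h 2 v1 / 3 > 0 /\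
     (u1 * Derive_n h 1 v1 * (u2 * Derive_n h 1 v2)) ^ 2 <
       ((u1 * Derive_n h 1 v1) ^ 2 + u1 * Derive_n h 2 v1 / 3) *
       ((u2 * Derive_n h 1 v2) ^ 2 + u2 * Derive_n h 2 v2 / 3)) /\
  (exists p : params, is_global_min (risk h) p /\ risk h p = 0) /\
  (exists p : params, is_local_min (risk h) p /\ risk h p = 1 / 3).
Proof.
  intros h.
  set (s := sqrt 3).
  assert (Hs2 : s * s = 3) by (unfold s; apply sqrt_sqrt; lra).
  assert (Hs : 0 < s) by (unfold s; apply sqrt_lt_R0; lra).
  assert (Hs43 : 4/3 < s) by nra.
  assert (Hs2' : s < 2) by nra.
  pose proof PI_RGT_0 as Hpi. pose proof PI_4 as Hpi4.
  assert (A3 : atan s = PI / 3).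
  { unfold s. rewrite <- tan_PI3. apply atan_tan. lra. }
  assert (A6 : atan (1 / s) = PI / 6).
  { unfold s. rewrite <- tan_PI6. apply atan_tan. lra. }
  set (v := 1 / s).
  assert (Hv0 : 0 < v) by (unfold v; apply Rdiv_lt_0_compat; lra).
  assert (Hvs : v * s = 1) by (unfold v; field; lra).
  assert (Hv34 : v < 3/4) by nra.
  assert (Hvv : v * v = 1/3).
  { assert (H := f_equal (fun z => z*z) Hvs). simpl in H.
    replace (v*s*(v*s)) with (v*v*(s*s)) in H by ring. rewrite Hs2 in H. lra. }
  assert (E1 : fat 1 v = 3/4).
  { unfold fat. cbn [AP peval pow]. replace (1 + v * (v * 1)) with (4/3) by lra. field. }
  assert (E2 : fat 2 v = - 2 * v * (9/16)).
  { unfold fat. cbn [AP]. rewrite !peval_padd, peval_pscal. cbn [peval pder padd pow].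
    replace (1 + v * (v * 1)) with (4/3) by lra. simpl INR. field. }
  apply (master h fat v (1/4) 6 72 (-1) (2 / PI + 1)); try lra.
  - intros x _. reflexivity.
  - intros n x _. apply fat_derive.
  - intros n Hn. destruct n as [|m]; [lia|].
    eapply Rle_trans; [apply fat_bound; rewrite Rabs_right; lra|].
    change (Factorial.fact (S m)) with ((S m) * Factorial.fact m)%nat.
    rewrite mult_INR, S_INR. simpl pow.
    pose proof (fact_pos_R m). pose proof (pos_INR m).
    assert (0 <= 6 ^ m) by (apply pow_le; lra).
    assert (0 <= 6 ^ m * INR (Factorial.fact m)) by nra. nra.
  - intros x Hx. apply Rabs_def2 in Hx.
    assert (Hx1 : Rabs x <= 1) by (apply Rabs_le; lra). split.
    + eapply Rle_trans; [apply (fat_bound 1 x Hx1)|]. simpl. lra.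
    + eapply Rle_trans; [apply (fat_bound 2 x Hx1)|]. simpl. lra.
  - unfold h. fold v in A6. rewrite A6. field. lra.
  - rewrite E1, E2. nra.
  - rewrite E1, E2.
    replace ((3 / 4) ^ 2 * (-1 + (2 / PI + 1)) + -2 * v * (9 / 16) / 3) with
      (9 / 16 * (2 / PI - 2 * v / 3)) by (field; lra).
    assert (0 < 2 / PI - 2 * v / 3).
    { assert (2 / PI >= 1/2) by (apply Rle_ge; apply (Rmult_le_reg_r PI); [lra|]; replace (2 / PI * PI) with 2 by (field; lra); lra).
      lra. }
    assert (0 < 2 / PI) by (apply Rdiv_lt_0_compat; lra).
    assert (0 < (-1) * (2 / PI + 1) * (-2 * v * (9 / 16))) by nra.
    nra.
  - exists (2 / s), 0, (2 * s), 0. unfold h. rewrite atan_0. split; [ring|].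
    replace ((2 * s + 0) / 2) with s by field. replace ((2 / s + 0) / 2) with (1 / s) by (field; lra).
    rewrite A3, A6.
    assert (atan 1 < atan (2 / s)) by (apply atan_increasing; apply (Rmult_lt_reg_r s); [lra|]; replace (2 / s * s) with 2 by (field; lra); lra).
    rewrite atan_1 in H.
    pose proof (atan_bound (2 * s)).
    assert (PI / 4 * (PI / 3) < atan (2 / s) * (PI / 3)) by (apply Rmult_lt_compat_r; lra).
    assert (atan (2 * s) * (PI / 6) < PI / 2 * (PI / 6)) by (apply Rmult_lt_compat_r; lra).
    intro Heq. nra.
Qed.

Theorem corollary1 (h : R -> R) (Hh : admissible_activation h) :
  (* (i) *)
  (exists v1 v2 v3 v4 : R,
     h v1 * h v4 = h v2 * h v3 /\
     h v1 * h ((v3 + v4) / 2) <> h v3 * h ((v1 + v2) / 2)) /\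
  (* (ii) *)
  (exists v1 v2 u1 u2 : R,
     u1 * h v1 + u2 * h v2 = 1 / 3 /\
     smooth_at h v1 /\ smooth_at h v2 /\
     (exists c : R, 0 < c /\
        forall n : nat, (1 <= n)%nat ->
          Rabs (Derive_n h n v1) <= c ^ n * INR (Factorial.fact n) /\
          Rabs (Derive_n h n v2) <= c ^ n * INR (Factorial.fact n)) /\
     (u1 * Derive_n h 1 v1) ^ 2 + u1 * Derive_n h 2 v1 / 3 > 0 /\
     (u1 * Derive_n h 1 v1 * (u2 * Derive_n h 1 v2)) ^ 2 <
       ((u1 * Derive_n h 1 v1) ^ 2 + u1 * Derive_n h 2 v1 / 3) *
       ((u2 * Derive_n h 1 v2) ^ 2 + u2 * Derive_n h 2 v2 / 3)) /\
  (* consequence *)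
  (exists p : params, is_global_min (risk h) p /\ risk h p = 0) /\
  (exists p : params, is_local_min (risk h) p /\ risk h p = 1 / 3).

Proof.
  destruct Hh as [->|[->|[->|[->|[lam [al [Ha [Hl ->]]]]]]]].
  - exact sigmoid_case.
  - exact tanh_case.
  - exact atan_case.
  - exact quad_case.
  - apply (elu_case lam al Ha). lra.
Qed.
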